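(* Let $(k,\nu)$ be a valued field with value group contained in $\mathbb{Z}$, let $V$ be a $k$-vector space of finite dimension $r$ with a value function $\operatorname{val}\colon V\to\mathbb{Z}\cup\{\infty\}$, and let $x\in k$ with $\nu(x)=1$. Assume that the completion $V_\nu$ of $V$ has dimension $r$ over the completion $k_\nu$ of $k$. Consider the following procedure, applied to a $k$-basis $B_1,\dots,B_r$ of $V$: for $d=1,\dots,r$ in turn, first replace $B_d$ by $x^{-\operatorname{val}(B_d)}B_d$; then, as long as there exist $\alpha_1,\dots,\alpha_{d-1}\in k$ with $\operatorname{val}(\alpha_1B_1+\cdots+\alpha_{d-1}B_{d-1}+B_d)>0$, choose such $\alpha_1,\dots,\alpha_{d-1}$ and replace $B_d$ by $x^{-1}(\alpha_1B_1+\cdots+\alpha_{d-1}B_{d-1}+B_d)$. Finally return $B_1,\dots,B_r$. Then this procedure terminates (each of its while-loops performs only finitely many iterations, regardless of the choices of the $\alpha_i$).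
   Context: A valuation $\nu\colon k\to\mathbb{Z}\cup\{\infty\}$ on a field $k$ of characteristic zero satisfies $\nu(a)=\infty\iff a=0$, $\nu(ab)=\nu(a)+\nu(b)$, $\nu(a+b)\ge\min\{\nu(a),\nu(b)\}$. A value function $\operatorname{val}\colon V\to\mathbb{Z}\cup\{\infty\}$ on a $k$-vector space satisfies $\operatorname{val}(v)=\infty\iff v=0$, $\operatorname{val}(av)=\nu(a)+\operatorname{val}(v)$, $\operatorname{val}(v+w)\ge\min\{\operatorname{val}(v),\operatorname{val}(w)\}$. The $\nu$-adic absolute value $|a|=e^{-\nu(a)}$ defines a topology on $k$; $k_\nu$ denotes the completion of $k$ (Cauchy sequences modulo null sequences), with $\nu$ extended by continuity. $V$ carries the norm $\|v\|=e^{-\operatorname{val}(v)}$, and $V_\nu$ denotes the $k_\nu$-vector space obtained from $V$ by scalar extension, i.e. its completion with respect to this norm (for a basis $B_1,\dots,B_r$ of $V$, it is the $k_\nu$-span of $B_1,\dots,B_r$); in general $\dim_{k_\nu}V_\nu\le\dim_k V$. *)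

(* Defs.v *)
From HB Require Import structures.
From mathcomp Require Import all_boot all_order all_algebra.
From mathcomp Require Import constructive_ereal.
Set Implicit Arguments. Unset Strict Implicit. Unset Printing Implicit Defensive.
Import Order.TTheory GRing.Theory Num.Theory.
Local Open Scope ring_scope.
Local Open Scope ereal_scope.

(* Z ∪ {∞} is modelled by  \bar int  (+oo = ∞). *)

Definition is_valuation (k : fieldType) (nu : k -> \bar int) : Prop :=
  [/\ forall a : k, nu a = +oo <-> a = 0%R,
      forall a b : k, nu (a * b)%R = nu a + nu b &
      forall a b : k, Order.min (nu a) (nu b) <= nu (a + b)%R].

Definition is_value_function (k : fieldType) (V : vectType k)
  (nu : k -> \bar int) (val : V -> \bar int) : Prop :=
  [/\ forall v : V, val v = +oo <-> v = 0%R,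
      forall (a : k) (v : V), val (a *: v)%R = nu a + val v &
      forall v w : V, Order.min (val v) (val w) <= val (v + w)%R].

Definition cauchy_seq (k : fieldType) (nu : k -> \bar int) (a : nat -> k) :=
  forall M : int, exists N : nat, forall m n : nat,
    (N <= m)%N -> (N <= n)%N -> (M%:E <= nu (a m - a n)%R).

Definition null_seq (T : Type) (w : T -> \bar int) (a : nat -> T) :=
  forall M : int, exists N : nat, forall n : nat, (N <= n)%N -> M%:E <= w (a n).

(* dim_{k_nu} V_nu = dim_k V.  V_nu is the k_nu-span of the images [B_i] of a
   k-basis B of V in the completion of V (Cauchy sequences of V modulo null
   sequences); a k_nu-combination  sum_i [a_i] [B_i]  (with a_i Cauchy in k)
   is the class of the sequence  n |-> sum_i a_i(n) B_i.  The dimension is the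
   full one iff the [B_i] are k_nu-linearly independent, i.e.: *)
Definition completion_full_dim (k : fieldType) (V : vectType k)
  (nu : k -> \bar int) (val : V -> \bar int) : Prop :=
  forall B : (\dim (fullv : {vspace V})).-tuple V, basis_of fullv B ->
  forall a : 'I_(\dim (fullv : {vspace V})) -> nat -> k,
    (forall i, cauchy_seq nu (a i)) ->
    null_seq val (fun n => (\sum_i a i n *: tnth B i)%R) ->
    forall i, null_seq nu (a i).

(* Indices are 0-based: the paper's d = 1..r is our i = 0..r-1. *)
Inductive phase := Start of nat | Loop of nat.

Definition upd (r : nat) (V : Type) (B : 'I_r -> V) (i : 'I_r) (v : V) : 'I_r -> V :=
  fun j => if j == i then v else B j.

Definition comb (k : fieldType) (V : vectType k) (r : nat)
  (B : 'I_r -> V) (i : 'I_r) (alpha : 'I_r -> k) : V :=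
  (\sum_(j < r | (j < i)%N) alpha j *: B j + B i)%R.

Inductive proc_step (k : fieldType) (V : vectType k) (r : nat)
  (val : V -> \bar int) (x : k) :
  phase * ('I_r -> V) -> phase * ('I_r -> V) -> Prop :=
| step_normalize (i : 'I_r) (B : 'I_r -> V) :
    proc_step val x (Start i, B)
      (Loop i, upd B i ((x ^ (- fine (val (B i))))%R *: B i)%R)
| step_loop (i : 'I_r) (B : 'I_r -> V) (alpha : 'I_r -> k) :
    0%:E < val (comb B i alpha) ->
    proc_step val x (Loop i, B) (Loop i, upd B i (x^-1 *: comb B i alpha)%R)
| step_exit (i : 'I_r) (B : 'I_r -> V) :
    (forall alpha : 'I_r -> k, ~ (0%:E < val (comb B i alpha))) ->
    proc_step val x (Loop i, B) (Start i.+1, B).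
(* The state (Start r, B) has no successor: the procedure returns B. *)

Definition terminates (k : fieldType) (V : vectType k) (r : nat)
  (val : V -> \bar int) (x : k) (s : phase * ('I_r -> V)) : Prop :=
  Acc (fun s' s0 => proc_step val x s0 s') s.

(* Main.v *)
Require Import Defs.
From HB Require Import structures.
From mathcomp Require Import all_boot all_order all_algebra.
From mathcomp Require Import constructive_ereal.
From mathcomp Require Import zify.
From Stdlib Require Import Classical ClassicalEpsilon.
Import Order.TTheory GRing.Theory Num.Theory.
Local Open Scope ring_scope.
Local Open Scope ereal_scope.

Lemma nu_fin {k : fieldType} {nu : k -> \bar int} : is_valuation nu ->
  forall a : k, a != 0%R -> nu a = (fine (nu a))%:E.
Proof.
move=> [h0 hM hA] a a0.
case E: (nu a) => [z| |] //=.
- by move/h0: E => /eqP; rewrite (negbTE a0).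
- have := hM 0%R a; rewrite mul0r E.
  have -> : nu 0%R = +oo by apply/h0.
  by [].
Qed.

Lemma nu1 {k : fieldType} {nu : k -> \bar int} : is_valuation nu -> nu 1%R = 0.
Proof.
move=> hnu; have := nu_fin hnu 1%R (oner_neq0 k).
case: hnu => _ hM _.
have := hM 1%R 1%R; rewrite mulr1 => h1 h2.
rewrite h2 in h1; rewrite h2; move: h1; rewrite -EFinD => -[] h.
congr (_%:E); lia.
Qed.

Lemma nuN1 {k : fieldType} {nu : k -> \bar int} : is_valuation nu -> nu (-1)%R = 0.
Proof.
move=> hnu; have := nu_fin hnu (-1)%R (ltac:(by rewrite oppr_eq0 oner_eq0)) => h2.
have := nu1 hnu.
case: hnu => _ hM _.
have := hM (-1)%R (-1)%R; rewrite mulrNN mulr1 => ->.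
rewrite h2 -EFinD => -[] h; rewrite h2 /=; congr (_%:E); lia.
Qed.

Lemma nuV {k : fieldType} {nu : k -> \bar int} (x : k) : is_valuation nu ->
  nu x = 1%:E -> nu (x^-1)%R = (-1)%:E.
Proof.
move=> hnu hx.
have x0 : x != 0%R.
  apply/eqP => x0; case: hnu => h0 _ _; have := proj2 (h0 x) x0; by rewrite hx.
have := nu_fin hnu _ (invr_neq0 x0) => h2.
have := nu1 hnu.
case: hnu => _ hM _.
rewrite -(mulfV x0) hM hx h2 -EFinD => -[] h; rewrite h2 /=; congr (_%:E); lia.
Qed.

Lemma val_fin {k : fieldType} {V : vectType k} {nu : k -> \bar int} {val : V -> \bar int} :
  is_valuation nu -> is_value_function nu val ->
  forall v : V, v != 0%R -> val v = (fine (val v))%:E.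
Proof.
move=> [h0 _ _] [g0 gZ _] v v0.
case E: (val v) => [z| |] //=.
- by move/g0: E => /eqP; rewrite (negbTE v0).
- have := gZ 0%R v; rewrite scale0r E.
  have -> : nu 0%R = +oo by apply/h0.
  have -> : val 0%R = +oo by apply/g0.
  by [].
Qed.

Lemma valN {k : fieldType} {V : vectType k} {nu : k -> \bar int} {val : V -> \bar int} :
  is_valuation nu -> is_value_function nu val ->
  forall v : V, val (- v)%R = val v.
Proof.
move=> hnu [g0 gZ _] v.
by rewrite -scaleN1r gZ nuN1 // add0e.
Qed.

Lemma val_add_ge {k : fieldType} {V : vectType k} {nu : k -> \bar int} {val : V -> \bar int} :
  is_value_function nu val ->
  forall (M : \bar int) (v w : V), M <= val v -> M <= val w -> M <= val (v + w)%R.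
Proof.
move=> [_ _ gA] M v w h1 h2.
apply: le_trans (gA v w); by rewrite le_min h1 h2.
Qed.

Lemma val_sum_ge {k : fieldType} {V : vectType k} {nu : k -> \bar int} {val : V -> \bar int} :
  is_value_function nu val ->
  forall (M : \bar int) (I : Type) (s : seq I) (P : pred I) (F : I -> V),
  (forall i, P i -> M <= val (F i)) -> M <= val (\sum_(i <- s | P i) F i)%R.
Proof.
move=> hv M I s P F h.
apply: (big_ind (fun v => M <= val v)).
- case: hv => g0 _ _; have -> : val 0%R = +oo by apply/g0.
  exact: leey.
- by move=> v w; apply: (val_add_ge hv).
- exact: h.
Qed.

Definition ext {k : fieldType} {r : nat} (i : 'I_r) (alpha : 'I_r -> k) (j : 'I_r) : k :=
  if (j < i)%N then alpha j else if j == i then 1%R else 0%R.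

Lemma comb_full {k : fieldType} {V : vectType k} {r : nat} (f : 'I_r -> V) (i : 'I_r)
  (alpha : 'I_r -> k) : (\sum_j ext i alpha j *: f j)%R = comb f i alpha.
Proof.
rewrite /comb (bigID (fun j : 'I_r => (j < i)%N)) /=.
congr (_ + _)%R.
  by apply: eq_bigr => j hj; rewrite /ext hj.
rewrite (bigD1 i) /= ?ltnn // /ext ltnn eqxx scale1r big1 ?addr0 //.
move=> j /andP[h1 h2]; by rewrite (negbTE h1) (negbTE h2) scale0r.
Qed.

Lemma split_last {k : fieldType} {V : vectType k} {r : nat} (F : 'I_r -> V) (i0 : 'I_r) :
  (\sum_(j < r | (j < i0.+1)%N) F j = \sum_(j < r | (j < i0)%N) F j + F i0)%R.
Proof.
rewrite (bigD1 i0) /= ?ltnSn // addrC; congr (_ + _)%R.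
apply: eq_bigl => j; rewrite -(inj_eq val_inj) /=.
by apply/idP/idP => [/andP[h1 h2]|h]; [move: h1 h2; rewrite ltnS; lia | apply/andP; split; lia].
Qed.

Lemma Qof {k : fieldType} {V : vectType k} {nu : k -> \bar int} {val : V -> \bar int} :
  is_valuation nu -> is_value_function nu val -> completion_full_dim nu val ->
  forall (f : 'I_(\dim (fullv : {vspace V})) -> V),
  basis_of fullv (mktuple f) ->
  forall (i0 : 'I_(\dim (fullv : {vspace V}))) (C : int),
  (forall (beta : 'I_(\dim (fullv : {vspace V})) -> k) (M : int),
     M%:E <= val (\sum_(j < \dim (fullv : {vspace V}) | (j < i0)%N) beta j *: f j)%R ->
     forall j : 'I_(\dim (fullv : {vspace V})), (j < i0)%N -> (M - C)%:E <= nu (beta j)) ->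
  exists N : int, forall alpha, val (comb f i0 alpha) <= N%:E.
Proof.
move=> hnu hv hfull f hb i0 C HP.
apply: NNPP => hn.
have h1 : forall m : nat, exists alpha, (m%:Z)%:E < val (comb f i0 alpha).
  move=> m; apply: NNPP => hm; apply: hn; exists m%:Z => alpha.
  by rewrite leNgt; apply/negP => h; apply: hm; exists alpha.
pose A m := proj1_sig (constructive_indefinite_description _ (h1 m)).
have hA : forall m, (m%:Z)%:E < val (comb f i0 (A m)).
  by move=> m; rewrite /A; case: constructive_indefinite_description.
pose a j m := ext i0 (A m) j.
have hc : forall j, cauchy_seq nu (a j).
  move=> j M; exists (absz (M + C)%R) => m m' hm hm'.
  rewrite /a /ext; case: ifP => hj; last first.
    rewrite subrr; case: hnu => h0 _ _; have -> : nu 0%R = +oo by apply/h0.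
    exact: leey.
  have -> : M = (M + C - C)%R by rewrite addrK.
  apply: (HP (fun j => A m j - A m' j)%R) => //.
  have -> : (\sum_(j0 < \dim (fullv : {vspace V}) | (j0 < i0)%N) (A m j0 - A m' j0) *: f j0
     = comb f i0 (A m) - comb f i0 (A m'))%R.
    rewrite /comb opprD addrACA subrr addr0 -sumrB.
    by apply: eq_bigr => j0 _; rewrite scalerBl.
  apply: (val_add_ge hv); first apply: ltW; first apply: le_lt_trans (hA m).
    by rewrite lee_fin; lia.
  rewrite (valN hnu hv); apply: ltW; apply: le_lt_trans (hA m').
  by rewrite lee_fin; lia.
have hnull : null_seq val (fun n => (\sum_i a i n *: tnth (mktuple f) i)%R).
  move=> M; exists (absz M) => m hm.
  have -> : (\sum_i a i m *: tnth (mktuple f) i = comb f i0 (A m))%R.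
    rewrite -comb_full; apply: eq_bigr => j _; by rewrite tnth_mktuple.
  apply: ltW; apply: le_lt_trans (hA m); by rewrite lee_fin; lia.
have := hfull (mktuple f) hb a hc hnull i0 1%Z.
case=> N /(_ N (leqnn N)).
by rewrite /a /ext ltnn eqxx (nu1 hnu).
Qed.

Lemma Pstep {k : fieldType} {V : vectType k} {nu : k -> \bar int} {val : V -> \bar int} :
  is_valuation nu -> is_value_function nu val ->
  forall (r : nat) (f : 'I_r -> V) (i0 : 'I_r) (C N : int),
  f i0 != 0%R ->
  (forall (beta : 'I_r -> k) (M : int),
     M%:E <= val (\sum_(j < r | (j < i0)%N) beta j *: f j)%R ->
     forall j : 'I_r, (j < i0)%N -> (M - C)%:E <= nu (beta j)) ->
  (forall alpha, val (comb f i0 alpha) <= N%:E) ->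
  exists C' : int, forall (beta : 'I_r -> k) (M : int),
     M%:E <= val (\sum_(j < r | (j < i0.+1)%N) beta j *: f j)%R ->
     forall j : 'I_r, (j < i0.+1)%N -> (M - C')%:E <= nu (beta j).
Proof.
move=> hnu hv r f i0 C N f0 HP HQ.
have hF := val_fin hnu hv _ f0.
set F := fine (val (f i0)) in hF.
exists (`|C| + `|N| + `|N - F|)%R => beta M.
rewrite split_last => hM.
set S := (\sum_(j < r | (j < i0)%N) beta j *: f j)%R in hM.
have hb : (M - N)%:E <= nu (beta i0).
  have [b0|b0] := eqVneq (beta i0) 0%R.
    rewrite b0; case: hnu => h0 _ _; have -> : nu 0%R = +oo by apply/h0.
    exact: leey.
  have e : (S + beta i0 *: f i0 = beta i0 *: comb f i0 (fun j => beta j / beta i0))%R.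
    rewrite /comb scalerDr scaler_sumr; congr (_ + _)%R.
    by apply: eq_bigr => j _; rewrite scalerA mulrC divfK.
  rewrite e in hM; case: hv => _ gZ _; rewrite gZ in hM.
  rewrite (nu_fin hnu _ b0) in hM *.
  have := HQ (fun j => beta j / beta i0)%R.
  case: (val (comb f i0 (fun j => beta j / beta i0)%R)) hM => [c| |] //=.
  rewrite -EFinD !lee_fin => h1 h2; lia.
move=> j; rewrite ltnS leq_eqVlt => /orP[/eqP hj|hj].
  have -> : j = i0 by apply: val_inj.
  apply: le_trans hb; rewrite lee_fin; lia.
have hS : (M - `|N - F|)%:E <= val S.
  have -> : S = ((S + beta i0 *: f i0) + - (beta i0 *: f i0))%R by rewrite addrK.
  apply: (val_add_ge hv).
    by apply: le_trans hM; rewrite lee_fin; lia.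
  rewrite (valN hnu hv); case: hv => _ gZ _; rewrite gZ hF.
  move: hb; case: (nu (beta i0)) => [b| |] //=.
    by rewrite -EFinD !lee_fin => h; lia.
  by move=> _; exact: leey.
have := HP beta _ hS j hj.
apply: le_trans; rewrite lee_fin; lia.
Qed.

Lemma Pind {k : fieldType} {V : vectType k} {nu : k -> \bar int} {val : V -> \bar int} :
  is_valuation nu -> is_value_function nu val -> completion_full_dim nu val ->
  forall (f : 'I_(\dim (fullv : {vspace V})) -> V),
  basis_of fullv (mktuple f) ->
  forall i : nat, (i <= \dim (fullv : {vspace V}))%N ->
  exists C : int,
  (forall (beta : 'I_(\dim (fullv : {vspace V})) -> k) (M : int),
     M%:E <= val (\sum_(j < \dim (fullv : {vspace V}) | (j < i)%N) beta j *: f j)%R ->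
     forall j : 'I_(\dim (fullv : {vspace V})), (j < i)%N -> (M - C)%:E <= nu (beta j)).
Proof.
move=> hnu hv hfull f hb; elim=> [|i IH] hi.
  by exists 0%R.
have [C HP] := IH (ltnW hi).
pose i0 : 'I_(\dim (fullv : {vspace V})) := Ordinal hi.
have [N HQ] := Qof hnu hv hfull f hb i0 C HP.
have f0 : f i0 != 0%R.
  apply: (free_not0 (basis_free hb)).
  by rewrite -(tnth_mktuple f i0) mem_tnth.
exact: (Pstep hnu hv _ f i0 C N f0 HP HQ).
Qed.

Lemma basis_upd {k : fieldType} {V : vectType k} {n : nat}
  (B B' : 'I_n -> V) :
  (n <= \dim (fullv : {vspace V}))%N ->
  basis_of fullv (mktuple B) ->
  (forall j, B j \in <<mktuple B'>>%VS) -> basis_of fullv (mktuple B').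
Proof.
move=> hn hb hj; rewrite basisEdim size_tuple hn andbT.
rewrite -(span_basis hb); apply/span_subvP => v /tnthP[j ->].
by rewrite tnth_mktuple.
Qed.

Lemma memB' {k : fieldType} {V : vectType k} {n : nat} (B : 'I_n -> V) j :
  B j \in <<mktuple B>>%VS.
Proof. by apply: memv_span; rewrite -(tnth_mktuple B j) mem_tnth. Qed.

Lemma basis_scale {k : fieldType} {V : vectType k}
  (B : 'I_(\dim (fullv : {vspace V})) -> V) i (c : k) :
  c != 0%R -> basis_of fullv (mktuple B) ->
  basis_of fullv (mktuple (upd B i (c *: B i)%R)).
Proof.
move=> c0 hb; apply: (basis_upd B _ (leqnn _) hb) => j.
have [->|ji] := eqVneq j i.
  have e : B i = (c^-1 *: upd B i (c *: B i) i)%R.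
    by rewrite /upd eqxx scalerA mulVf // scale1r.
  rewrite {1}e.
  by apply: memvZ; apply: memB'.
have -> : B j = upd B i (c *: B i)%R j by rewrite /upd (negbTE ji).
exact: memB'.
Qed.

Lemma basis_loop {k : fieldType} {V : vectType k}
  (B : 'I_(\dim (fullv : {vspace V})) -> V) i (x : k) alpha :
  x != 0%R -> basis_of fullv (mktuple B) ->
  basis_of fullv (mktuple (upd B i (x^-1 *: comb B i alpha)%R)).
Proof.
move=> x0 hb; set B' := upd _ _ _.
apply: (basis_upd B _ (leqnn _) hb) => j.
have [->|ji] := eqVneq j i.
  have e : B i = (x *: B' i - \sum_(l < \dim (fullv : {vspace V}) | (l < i)%N) alpha l *: B' l)%R.
    rewrite {1}/B' /upd eqxx scalerA mulfV // scale1r /comb.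
    suff -> : (\sum_(l < \dim (fullv : {vspace V}) | (l < i)%N) alpha l *: B' l =
       \sum_(l < \dim (fullv : {vspace V}) | (l < i)%N) alpha l *: B l)%R.
      by rewrite addrAC subrr add0r.
    apply: eq_bigr => l hl; rewrite /B' /upd.
    by have -> : (l == i) = false by apply/negbTE; rewrite -(inj_eq val_inj) /=; lia.
  rewrite {1}e; apply: memvB; first by apply: memvZ; apply: memB'.
  by apply: memv_suml => l _; apply: memvZ; apply: memB'.
have -> : B j = B' j by rewrite /B' /upd (negbTE ji).
exact: memB'.
Qed.

Lemma bound_of_basis {k : fieldType} {V : vectType k} {nu : k -> \bar int} {val : V -> \bar int} :
  is_valuation nu -> is_value_function nu val -> completion_full_dim nu val ->
  forall (B : 'I_(\dim (fullv : {vspace V})) -> V),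
  basis_of fullv (mktuple B) ->
  forall i, exists N : nat, forall alpha, val (comb B i alpha) <= (N%:Z)%:E.
Proof.
move=> hnu hv hfull B hb i.
have [C HP] := Pind hnu hv hfull B hb _ (leqnn _).
exists (absz C) => alpha.
rewrite leNgt; apply/negP => hlt.
have h1 : (C + 1)%:E <= val (comb B i alpha).
  move: hlt; case: (val (comb B i alpha)) => [c| |] //=.
  - rewrite !lte_fin !lee_fin => h; lia.
  - by move=> _; exact: leey.
rewrite -comb_full in h1.
have hs : (C + 1)%:E <= val (\sum_(j < \dim (fullv : {vspace V}) | (j < \dim (fullv : {vspace V}))%N) ext i alpha j *: B j)%R.
  by under eq_bigl do rewrite ltn_ord.
have := HP _ _ hs i (ltn_ord i).
rewrite /ext ltnn eqxx (nu1 hnu) lee_fin => h; lia.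
Qed.

Lemma comb_step {k : fieldType} {V : vectType k} {r : nat} (B : 'I_r -> V) (i : 'I_r)
  (x : k) (alpha beta : 'I_r -> k) : x != 0%R ->
  comb (upd B i (x^-1 *: comb B i alpha)%R) i beta =
  (x^-1 *: comb B i (fun j => x * beta j + alpha j))%R.
Proof.
move=> x0; rewrite {1 3}/comb /upd eqxx !scalerDr !scaler_sumr addrA; congr (_ + _)%R.
rewrite -big_split; apply: eq_bigr => j hj /=.
have -> : (j == i) = false by apply/negbTE; rewrite -(inj_eq val_inj) /=; lia.
by rewrite !scalerA mulrDr mulrA mulVf // mul1r scalerDl.
Qed.

Lemma loop_inv {k : fieldType} {V : vectType k} {r : nat} (val : V -> \bar int) (x : k)
  (i : 'I_r) (B : 'I_r -> V) s' :
  proc_step val x (Loop i, B) s' ->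
  (exists alpha, 0%:E < val (comb B i alpha) /\ s' = (Loop i, upd B i (x^-1 *: comb B i alpha)%R))
  \/ s' = (Start i.+1, B).
Proof.
move=> H; remember (Loop i, B) as s eqn:E; case: H E => [i' B'|i' B' a h|i' B' h] [] //.
- by move=> /val_inj ei eB; subst; left; exists a.
- by move=> /val_inj ei eB; subst; right.
Qed.

Lemma loop_acc {k : fieldType} {V : vectType k} {nu : k -> \bar int} {val : V -> \bar int}
  (x : k) :
  is_valuation nu -> is_value_function nu val -> nu x = 1%:E ->
  forall i : 'I_(\dim (fullv : {vspace V})),
  (forall B : 'I_(\dim (fullv : {vspace V})) -> V, basis_of fullv (mktuple B) -> terminates val x (Start i.+1, B)) ->
  forall m : nat, forall B : 'I_(\dim (fullv : {vspace V})) -> V, basis_of fullv (mktuple B) ->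
  (forall alpha, val (comb B i alpha) <= (m%:Z)%:E) ->
  terminates val x (Loop i, B).
Proof.
move=> hnu hv hx i hexit.
have x0 : x != 0%R.
  apply/eqP => x0; case: hnu => h0 _ _; have := proj2 (h0 x) x0; by rewrite hx.
elim=> [|m IH] B hb hB; constructor => s' /loop_inv [[alpha [H3 ->]]|->].
- have := lt_le_trans H3 (hB alpha); by rewrite ltxx.
- exact: hexit.
- apply: IH; first exact: basis_loop.
  move=> beta; rewrite comb_step //.
  case: hv => _ gZ _; rewrite gZ (nuV x hnu hx).
  have := hB (fun j => x * beta j + alpha j)%R.
  case: (val _) => [c| |] //=; rewrite -?EFinD !lee_fin => h; lia.
- exact: hexit.
Qed.

Lemma start_inv {k : fieldType} {V : vectType k} {r : nat} (val : V -> \bar int) (x : k)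
  (i : nat) (B : 'I_r -> V) s' :
  proc_step val x (Start i, B) s' ->
  exists i0 : 'I_r, i = i0 /\
    s' = (Loop i0, upd B i0 ((x ^ (- fine (val (B i0))))%R *: B i0)%R).
Proof.
move=> H; remember (Start i, B) as s eqn:E; case: H E => [i' B'|i' B' a h|i' B' h] [] //.
by move=> ei eB; subst; exists i'.
Qed.

Lemma start_acc {k : fieldType} {V : vectType k} {nu : k -> \bar int} {val : V -> \bar int}
  (x : k) :
  is_valuation nu -> is_value_function nu val -> nu x = 1%:E ->
  completion_full_dim nu val ->
  forall d i : nat, (\dim (fullv : {vspace V}) - i)%N = d ->
  forall B : 'I_(\dim (fullv : {vspace V})) -> V, basis_of fullv (mktuple B) ->
  terminates val x (Start i, B).
Proof.
move=> hnu hv hx hfull.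
have x0 : x != 0%R.
  apply/eqP => x0; case: hnu => h0 _ _; have := proj2 (h0 x) x0; by rewrite hx.
elim=> [|d IH] i hd B hb; constructor => s' /start_inv [i0 [ei ->]].
  have := ltn_ord i0; lia.
set B'' := upd _ _ _.
have hb'' : basis_of fullv (mktuple B'') by apply: basis_scale => //; exact: expfz_neq0.
have [m hm] := bound_of_basis hnu hv hfull B'' hb'' i0.
apply: (loop_acc x hnu hv hx i0 _ m B'' hb'' hm).
move=> B1 hb1; apply: IH => //; lia.
Qed.

Theorem mainTheorem3 (k : fieldType) (V : vectType k)
  (nu : k -> \bar int) (val : V -> \bar int) (x : k)
  (B : (\dim (fullv : {vspace V})).-tuple V) :
  [pchar k] =i pred0 ->
  is_valuation nu ->
  is_value_function nu val ->
  nu x = 1%:E ->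
  completion_full_dim nu val ->
  basis_of fullv B ->
  terminates val x (Start 0, fun i => tnth B i).
Proof.
move=> _ hnu hv hx hfull hb.
apply: (start_acc x hnu hv hx hfull _ 0 erefl).
have -> : mktuple (fun i => tnth B i) = B.
  by apply: eq_from_tnth => i; rewrite tnth_mktuple.
exact: hb.
Qed.
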